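(* Let $K\ge1$, $T\ge1$ and $\ell_1,\dots,\ell_T\in[0,1]^K$. The regret of AdaHedge satisfies $\mathcal{R}^{\mathrm{ah}}_T=M^{\mathrm{ah}}_T-L^*_T+\Delta^{\mathrm{ah}}_T\le2\Delta^{\mathrm{ah}}_T$.
   Context: Hedge setting: $K$ experts; in round $t$ the learner chooses a probability vector $w_t$, then $\ell_t$ is revealed and the learner suffers $h_t=\sum_kw_{t,k}\ell_{t,k}$. Write $L_{t,k}=\sum_{s=1}^t\ell_{s,k}$ ($L_{0,k}=0$), $L^*_t=\min_kL_{t,k}$, $H_T=\sum_{t\le T}h_t$, regret $\mathcal{R}_T=H_T-L^*_T$. Exponential weights with learning rate $\eta\in(0,\infty]$ at time $t$: $w_{t,k}=e^{-\eta L_{t-1,k}}/\sum_je^{-\eta L_{t-1,j}}$ if $\eta<\infty$; for $\eta=\infty$, $w_t$ uniform on $\{k:L_{t-1,k}=L^*_{t-1}\}$. With learning rate $\eta_t$ in round $t$: mix loss $m_t=-\frac1{\eta_t}\ln\sum_kw_{t,k}e^{-\eta_t\ell_{t,k}}$ if $\eta_t<\infty$, $m_t=L^*_t-L^*_{t-1}$ if $\eta_t=\infty$; mixability gap $\delta_t=h_t-m_t$; $M_T=\sum_{t\le T}m_t$. AdaHedge: $\Delta^{\mathrm{ah}}_0=0$; in round $t$, $\eta^{\mathrm{ah}}_t=\ln K/\Delta^{\mathrm{ah}}_{t-1}$ ($=\infty$ if $\Delta^{\mathrm{ah}}_{t-1}=0$), weights are exponential weights with learning rate $\eta^{\mathrm{ah}}_t$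 from $L_{t-1}$, and $\Delta^{\mathrm{ah}}_t=\Delta^{\mathrm{ah}}_{t-1}+\delta^{\mathrm{ah}}_t$. Superscript ah denotes quantities for AdaHedge. *)

(* Defs.v *)
From HB Require Import structures.
From mathcomp Require Import all_boot all_order all_algebra.
From mathcomp Require Import all_classical all_reals all_analysis.
Set Implicit Arguments. Unset Strict Implicit. Unset Printing Implicit Defensive.
Import Order.TTheory GRing.Theory Num.Theory.
Local Open Scope ring_scope.

Section AdaHedge.
Variables (R : realType) (K : nat) (k0 : 'I_K).
(* loss vectors: round t (t >= 1) has loss vector ell t : 'I_K -> R *)
Variable ell : nat -> 'I_K -> R.

Definition Lcum (t : nat) (k : 'I_K) : R := \sum_(1 <= s < t.+1) ell s k.

(* minimum of a vector (k0 only serves as seed; K >= 1) *)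
Definition minL (L : 'I_K -> R) : R := \big[Num.min/L k0]_(k < K) L k.

Definition Lstar (t : nat) : R := minL (Lcum t).

(* learning rates in (0, oo]: None stands for eta = oo *)
Definition ew (eta : option R) (L : 'I_K -> R) (k : 'I_K) : R :=
  match eta with
  | Some e => expR (- e * L k) / \sum_(j < K) expR (- e * L j)
  | None => if L k == minL L
            then (#|[pred j : 'I_K | L j == minL L]|%:R)^-1 else 0
  end.

Definition wt (eta : option R) (t : nat) : 'I_K -> R := ew eta (Lcum t.-1).
Definition hloss (eta : option R) (t : nat) : R :=
  \sum_(k < K) wt eta t k * ell t k.
Definition mloss (eta : option R) (t : nat) : R :=
  match eta with
  | Some e => - e^-1 * ln (\sum_(k < K) wt eta t k * expR (- e * ell t k))
  | None => Lstar t - Lstar t.-1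
  end.
Definition mgap (eta : option R) (t : nat) : R := hloss eta t - mloss eta t.

Definition ah_eta (D : R) : option R :=
  if D == 0 then None else Some (ln (K%:R) / D).

Fixpoint ah_Delta (t : nat) : R :=
  match t with
  | 0 => 0
  | t'.+1 => ah_Delta t' + mgap (ah_eta (ah_Delta t')) t'.+1
  end.

Definition ah_eta_t (t : nat) : option R := ah_eta (ah_Delta t.-1).
Definition ah_h (t : nat) : R := hloss (ah_eta_t t) t.
Definition ah_m (t : nat) : R := mloss (ah_eta_t t) t.

Definition ah_H (T : nat) : R := \sum_(1 <= t < T.+1) ah_h t.
Definition ah_M (T : nat) : R := \sum_(1 <= t < T.+1) ah_m t.
Definition ah_regret (T : nat) : R := ah_H T - Lstar T.
End AdaHedge.

(* Main.v *)
Require Import Defs.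
From HB Require Import structures.
From mathcomp Require Import all_boot all_order all_algebra.
From mathcomp Require Import all_classical all_reals all_analysis.
From mathcomp Require Import ring lra zify.
From Stdlib Require Import Lia.
Import Order.TTheory GRing.Theory Num.Theory.
Local Open Scope ring_scope.

Section Aux.
Variables (R : realType) (K : nat) (k0 : 'I_K) (ell : nat -> 'I_K -> R).

Lemma minL_le (L : 'I_K -> R) k : minL k0 L <= L k.
Proof. exact: bigmin_le. Qed.

Lemma minL_att (L : 'I_K -> R) : exists k, minL k0 L = L k.
Proof.
rewrite /minL; apply: (big_ind (fun x => exists k, x = L k)).
- by exists k0.
- move=> x y [i ->] [j ->]; rewrite /Num.min; case: ifP => _; [by exists i|by exists j].
- by move=> i _; exists i.
Qed.

Definition F (eta : option R) (L : 'I_K -> R) : R :=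
  match eta with
  | Some e => - e^-1 * ln (\sum_(k < K) expR (- e * L k))
  | None => minL k0 L
  end.

Lemma Lcum_S t k : Lcum ell t.+1 k = Lcum ell t k + ell t.+1 k.
Proof. by rewrite /Lcum big_nat_recr. Qed.

Lemma Lcum0 k : Lcum ell 0 k = 0.
Proof. by rewrite /Lcum big_geq. Qed.

Lemma Z_gt0 (e : R) (L : 'I_K -> R) : 0 < \sum_(k < K) expR (- e * L k).
Proof.
apply: (@lt_le_trans _ _ (expR (- e * L k0))); first exact: expR_gt0.
rewrite (bigD1 k0) //= lerDl sumr_ge0 // => i _; exact/ltW/expR_gt0.
Qed.

Lemma mloss_F eta t :
  mloss k0 ell eta t.+1 = F eta (Lcum ell t.+1) - F eta (Lcum ell t).
Proof.
case: eta => [e|] //=.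
rewrite /wt /ew /=.
set Z := \sum_(k < K) expR (- e * Lcum ell t k).
have -> : \sum_(k < K) expR (- e * Lcum ell t k) / Z * expR (- e * ell t.+1 k)
   = (\sum_(k < K) expR (- e * Lcum ell t.+1 k)) / Z.
  rewrite mulr_suml; apply: eq_bigr => k _.
  by rewrite Lcum_S mulrDr expRD mulrAC.
have hZ : 0 < Z by exact: Z_gt0.
have hZ' := Z_gt0 e (Lcum ell t.+1).
rewrite lnM ?posrE ?invr_gt0 // lnV ?posrE //.
rewrite /Z; lra.
Qed.

Lemma tangent (a x : R) : expR a + expR a * (x - a) <= expR x.
Proof.
have -> : expR x = expR a * expR (x - a) by rewrite -expRD; congr expR; lra.
have := expR_ge1Dx (x - a); have := expR_gt0 a; nra.
Qed.

Lemma gap_some e t : 0 < e -> 0 <= mgap k0 ell (Some e) t.+1.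
Proof.
move=> he; rewrite /mgap /hloss /mloss /wt /ew /=.
set Z := \sum_(k < K) expR (- e * Lcum ell t k).
have hZ : 0 < Z by exact: Z_gt0.
set w := fun k => expR (- e * Lcum ell t k) / Z.
have hw k : 0 <= w k by rewrite /w divr_ge0 // ltW // expR_gt0.
have sw : \sum_(k < K) w k = 1.
  by rewrite /w -mulr_suml divff // gt_eqF.
rewrite -/(w _).
under [X in ln X]eq_bigr do rewrite -/(w _).
set h := \sum_(k < K) w k * ell t.+1 k.
set S := \sum_(k < K) w k * expR (- e * ell t.+1 k).
have hS : expR (- e * h) <= S.
  apply: (@le_trans _ _ (\sum_(k < K) w k * (expR (- e * h) + expR (- e * h) * (- e * ell t.+1 k - - e * h)))).
    under eq_bigr do rewrite mulrDr.
    rewrite big_split /= -mulr_suml sw mul1r lerDl.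
    under eq_bigr => k _ do rewrite mulrCA mulrBr.
    rewrite -mulr_sumr sumrB -mulr_suml sw.
    rewrite mul1r.
    have -> : \sum_(i < K) w i * (- e * ell t.+1 i) = - e * h.
      rewrite /h mulr_sumr; apply: eq_bigr => k _; lra.
    by rewrite subrr mulr0.
  apply: ler_sum => k _; apply: ler_wpM2l => //; exact: tangent.
have hSp : 0 < S by exact: lt_le_trans (expR_gt0 _) hS.
have hl : - e * h <= ln S.
  by rewrite -[X in X <= _]expRK ler_ln ?posrE ?expR_gt0.
rewrite subr_ge0 mulNr -mulrN.
have -> : h = e^-1 * (e * h) by rewrite mulrA mulVf ?mul1r // gt_eqF.
apply: ler_wpM2l; first by rewrite invr_ge0 ltW.
lra.
Qed.

Lemma sum_w_none (L : 'I_K -> R) : \sum_(k < K) ew k0 None L k = 1.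
Proof.
rewrite /ew -big_mkcond /=.
have -> : \sum_(i < K | L i == minL k0 L) (#|[pred j | L j == minL k0 L]|%:R)^-1
   = \sum_(i in [pred j | L j == minL k0 L]) (#|[pred j | L j == minL k0 L]|%:R : R)^-1 by [].
rewrite sumr_const -[X in X = _]mulr_natr mulVf // pnatr_eq0 -lt0n.
have [k hk] := minL_att L.
by apply/card_gt0P; exists k; rewrite inE -hk.
Qed.

Lemma w_none_ge0 (L : 'I_K -> R) k : 0 <= ew k0 None L k.
Proof. by rewrite /ew; case: ifP => // _; rewrite invr_ge0. Qed.

Lemma gap_none t : 0 <= mgap k0 ell None t.+1.
Proof.
rewrite /mgap /hloss /mloss /wt /Lstar /=.
set L := Lcum ell t.
rewrite subr_ge0.
set d := _ - _.
have -> : d = \sum_(k < K) ew k0 None L k * d by rewrite -mulr_suml sum_w_none mul1r.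
apply: ler_sum => k _.
rewrite /ew; case: ifP => [/eqP hk|_]; last by rewrite !mul0r.
apply: ler_wpM2l; first by rewrite invr_ge0.
have := minL_le (Lcum ell t.+1) k; rewrite Lcum_S -/L hk; rewrite /d; lra.
Qed.

Lemma gap_none_K1 t : (K <= 1)%N -> mgap k0 ell None t.+1 = 0.
Proof.
move=> hK.
have all_eq (i : 'I_K) : i = k0.
  apply/val_inj => /=; have h1 := ltn_ord i; have h2 := ltn_ord k0; lia.
have sum1 (f : 'I_K -> R) : \sum_(k < K) f k = f k0.
  rewrite (bigD1 k0) //= big1 ?addr0 // => j /negP []; by rewrite (all_eq j).
have minE (L : 'I_K -> R) : minL k0 L = L k0.
  by have [k ->] := minL_att L; rewrite (all_eq k).
have h1 := sum_w_none (Lcum ell t); rewrite sum1 in h1.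
rewrite /mgap /hloss /mloss /wt sum1 /Lstar.
change (Lcum ell t.+1.-1) with (Lcum ell t); change (minL k0 (Lcum ell t.+1.-1)) with (minL k0 (Lcum ell t)).
rewrite h1 !minE Lcum_S; lra.
Qed.

Lemma F_le_min e (L : 'I_K -> R) : 0 < e -> F (Some e) L <= minL k0 L.
Proof.
move=> he /=; have [k hk] := minL_att L; rewrite hk.
have hZ := Z_gt0 e L.
have hle : expR (- e * L k) <= \sum_(j < K) expR (- e * L j).
  rewrite (bigD1 k) //= lerDl sumr_ge0 // => i _; exact/ltW/expR_gt0.
have hl : - e * L k <= ln (\sum_(j < K) expR (- e * L j)).
  by rewrite -[X in X <= _]expRK ler_ln ?posrE ?expR_gt0.
have -> : L k = - e^-1 * (- e * L k) by rewrite mulrA mulrNN mulVf ?mul1r // gt_eqF.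
rewrite !mulNr lerN2; apply: ler_wpM2l; [by rewrite invr_ge0 ltW | by rewrite -mulNr].
Qed.

Lemma F_ge e (L : 'I_K -> R) : 0 < e -> minL k0 L - ln K%:R / e <= F (Some e) L.
Proof.
move=> he /=.
have hZ := Z_gt0 e L.
have hK : (0 < K)%N by case: k0 => [m hm]; apply: leq_ltn_trans hm.
have hKR : 0 < (K%:R : R) by rewrite ltr0n.
have hle : \sum_(j < K) expR (- e * L j) <= K%:R * expR (- e * minL k0 L).
  have -> : K%:R * expR (- e * minL k0 L) = \sum_(j < K) expR (- e * minL k0 L).
    by rewrite sumr_const card_ord mulr_natl.
  apply: ler_sum => j _.
  rewrite ler_expR; have := minL_le L j; nra.
have hl : ln (\sum_(j < K) expR (- e * L j)) <= ln K%:R + - e * minL k0 L.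
  rewrite -[X in _ <= _ + X]expRK -lnM ?posrE ?expR_gt0 //.
  by rewrite ler_ln ?posrE ?mulr_gt0 ?expR_gt0.
have hie : 0 < e^-1 by rewrite invr_gt0.
have : e^-1 * ln (\sum_(j < K) expR (- e * L j)) <= e^-1 * (ln K%:R + - e * minL k0 L).
  by apply: ler_wpM2l => //; exact: ltW.
rewrite mulrDr mulrA mulrN mulVf ?gt_eqF // mulNr mul1r mulrC.
rewrite mulNr; lra.
Qed.

Lemma convex_exp (p u v : R) : 0 <= p <= 1 ->
  expR (p * u + (1 - p) * v) <= p * expR u + (1 - p) * expR v.
Proof.
move=> /andP[h0 h1].
set c := p * u + (1 - p) * v.
have hu := tangent c u; have hv := tangent c v; have hc := expR_gt0 c.
rewrite /c in hu hv hc *; nra.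
Qed.

Lemma powmean (p : R) (a : 'I_K -> R) : 0 <= p <= 1 ->
  ln ((\sum_(k < K) expR (p * a k)) / K%:R)
    <= p * ln ((\sum_(k < K) expR (a k)) / K%:R).
Proof.
move=> hp.
have hK : (0 < K)%N by case: k0 => [m hm]; apply: leq_ltn_trans hm.
have hKR : 0 < (K%:R : R) by rewrite ltr0n.
have hS : 0 < \sum_(k < K) expR (a k).
  by have := Z_gt0 (-1) a; under eq_bigr do rewrite opprK mul1r.
have hS' : 0 < \sum_(k < K) expR (p * a k).
  by have := Z_gt0 (- p) a; under eq_bigr do rewrite opprK.
set m := (\sum_(k < K) expR (a k)) / K%:R.
have hm : 0 < m by rewrite divr_gt0.
set v := ln m.
have hv : expR v = m by rewrite /v lnK ?posrE.
have hsum : (\sum_(k < K) expR (p * a k)) * expR ((1 - p) * v)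
    <= K%:R * m.
  rewrite mulr_suml.
  apply: (@le_trans _ _ (\sum_(k < K) (p * expR (a k) + (1 - p) * m))).
    apply: ler_sum => k _; rewrite -expRD -hv; exact: convex_exp.
  rewrite big_split /= -mulr_sumr sumr_const card_ord -[_ *+ K]mulr_natl.
  rewrite /m; set s := \sum_(k < K) expR (a k).
  rewrite mulrCA; have -> : K%:R * (s / K%:R) = s by rewrite mulrC divfK // gt_eqF.
  lra.
have hsum2 : (\sum_(k < K) expR (p * a k)) / K%:R <= expR (p * v).
  have he := expR_gt0 ((1 - p) * v).
  have -> : expR (p * v) = m / expR ((1 - p) * v).
    by rewrite -hv -expRB; congr expR; lra.
  rewrite ler_pdivlMr // mulrAC ler_pdivrMr // [m * _]mulrC.
  exact: hsum.
rewrite -[X in _ <= X]expRK ler_ln ?posrE ?expR_gt0 // ?divr_gt0.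
all: by [].
Qed.

Lemma key (hK1 : (1 < K)%N) (D D' : R) (L : 'I_K -> R) : 0 <= D -> D <= D' ->
  F (ah_eta K D) L + D <= F (ah_eta K D') L + D'.
Proof.
move=> hD hDD.
have hc : 0 < ln (K%:R : R) by apply: ln_gt0; rewrite ltr1n.
set c := ln (K%:R : R) in hc *.
rewrite /ah_eta -/c.
have [->|hD0] := eqVneq D 0.
  have [->|hD'0] := eqVneq D' 0; first by [].
  rewrite addr0.
  have hD'p : 0 < D' by rewrite lt_neqAle eq_sym hD'0 /=; apply: le_trans hD hDD.
  have he : 0 < c / D' by rewrite divr_gt0.
  have := F_ge _ L he; rewrite -/c.
  have -> : c / (c / D') = D' by rewrite invf_div mulrC divfK // gt_eqF.
  rewrite /F; lra.
have hDp : 0 < D by rewrite lt_neqAle eq_sym hD0 hD.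
have hD'p : 0 < D' by exact: lt_le_trans hDp hDD.
rewrite (gt_eqF hD'p) /=.
rewrite !invf_div.
set p := D / D'.
have hp : 0 <= p <= 1.
  by rewrite /p divr_ge0 ?(ltW hDp) ?(ltW hD'p) //= ler_pdivrMr // mul1r.
have := powmean p (fun k => - (c / D) * L k) hp.
have -> : \sum_(k < K) expR (p * (- (c / D) * L k)) = \sum_(k < K) expR (- (c / D') * L k).
  apply: eq_bigr => k _; congr expR; rewrite /p.
  by field; rewrite !gt_eqF.
have hKR : 0 < (K%:R : R) by rewrite ltr0n; apply: ltn_trans hK1.
have hZ := Z_gt0 (c / D) L.
have hZ' := Z_gt0 (c / D') L.
set Z := \sum_(k < K) _ in hZ.
set Z' := \sum_(k < K) _ in hZ'.
rewrite !lnM ?posrE ?invr_gt0 // !lnV ?posrE // -/c.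
set x := ln Z; set y := ln Z' => h.
have h2 : D' / c * (y - c) <= D / c * (x - c).
  have := ler_wpM2l (ltW (divr_gt0 hD'p hc)) h.
  have -> : D' / c * (p * (x + - c)) = D / c * (x - c).
    by rewrite /p; field; rewrite !gt_eqF.
  by [].
have e1 : D / c * (x - c) = D / c * x - D by field; rewrite gt_eqF.
have e2 : D' / c * (y - c) = D' / c * y - D' by field; rewrite gt_eqF.
rewrite e1 e2 in h2.
rewrite !mulNr; lra.
Qed.

Lemma main_eq T : ah_H k0 ell T = ah_M k0 ell T + ah_Delta k0 ell T.
Proof.
elim: T => [|t IH]; first by rewrite /ah_H /ah_M !big_geq // addr0.
have eH : ah_H k0 ell t.+1 = ah_H k0 ell t + ah_h k0 ell t.+1 by rewrite /ah_H big_nat_recr.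
have eM : ah_M k0 ell t.+1 = ah_M k0 ell t + ah_m k0 ell t.+1 by rewrite /ah_M big_nat_recr.
rewrite eH eM IH /= /mgap /ah_h /ah_m /ah_eta_t /=; lra.
Qed.

Lemma gap_ah (hK1 : (1 < K)%N) D t : 0 <= D -> 0 <= mgap k0 ell (ah_eta K D) t.+1.
Proof.
move=> hD; rewrite /ah_eta; have [_|hD0] := eqVneq D 0; first exact: gap_none.
apply: gap_some; apply: divr_gt0; first by apply: ln_gt0; rewrite ltr1n.
by rewrite lt_neqAle eq_sym hD0.
Qed.

Lemma main_bound T : ah_M k0 ell T <= Lstar k0 ell T + ah_Delta k0 ell T.
Proof.
have hK : (0 < K)%N by case: k0 => [m hm]; apply: leq_ltn_trans hm.
suff [Hstep Hfin] : (forall t (L : 'I_K -> R),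
      F (ah_eta K (ah_Delta k0 ell t)) L + ah_Delta k0 ell t
      <= F (ah_eta K (ah_Delta k0 ell t.+1)) L + ah_Delta k0 ell t.+1) /\
    (forall t (L : 'I_K -> R), F (ah_eta K (ah_Delta k0 ell t)) L <= minL k0 L).
  have Q : forall t, ah_M k0 ell t <= F (ah_eta K (ah_Delta k0 ell t)) (Lcum ell t) + ah_Delta k0 ell t.
    elim=> [|t IH].
      rewrite /ah_M big_geq // /= /ah_eta eqxx /= addr0.
      have [k ->] := minL_att (Lcum ell 0); by rewrite Lcum0.
    have eM : ah_M k0 ell t.+1 = ah_M k0 ell t + ah_m k0 ell t.+1 by rewrite /ah_M big_nat_recr.
    rewrite eM /ah_m; change (ah_eta_t k0 ell t.+1) with (ah_eta K (ah_Delta k0 ell t)); rewrite mloss_F.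
    have := Hstep t (Lcum ell t.+1); lra.
  have := Q T; have := Hfin T (Lcum ell T); rewrite /Lstar; lra.
have [hK1|hK1] := ltnP 1 K.
  have hD : forall t, 0 <= ah_Delta k0 ell t.
    elim=> [|t IH] //=; have := gap_ah hK1 _ t IH; lra.
  split.
    move=> t L; apply: key => //; rewrite /=; have := gap_ah hK1 _ t (hD t); lra.
  move=> t L; rewrite /ah_eta; have [_|hD0] := eqVneq (ah_Delta k0 ell t) 0; first by [].
  apply: F_le_min; apply: divr_gt0; first by apply: ln_gt0; rewrite ltr1n.
  by rewrite lt_neqAle eq_sym hD0 hD.
have hD : forall t, ah_Delta k0 ell t = 0.
  elim=> [|t IH] //=; by rewrite IH /ah_eta eqxx gap_none_K1 // addr0.
by split => t L; rewrite !hD /ah_eta eqxx.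
Qed.
End Aux.

Theorem lemma3 (R : realType) (K : nat) (hK : (0 < K)%N) (T : nat) (hT : (0 < T)%N)
  (ell : nat -> 'I_K -> R)
  (hell : forall t k, (1 <= t <= T)%N -> 0 <= ell t k <= 1) :
  let k0 := Ordinal hK in
  ah_regret k0 ell T = ah_M k0 ell T - Lstar k0 ell T + ah_Delta k0 ell T /\
  ah_M k0 ell T - Lstar k0 ell T + ah_Delta k0 ell T <= 2 * ah_Delta k0 ell T.
Proof.
move=> k0; split.
  by rewrite /ah_regret (@main_eq R K k0 ell T); lra.
have := @main_bound R K k0 ell T; lra.
Qed.
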